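(* Let $(G,R,\omega)$ be a metric RPP instance and $S$ an edge-minimizing Eulerian extension for it. Then $S$ contains no edge $\{u,v\}$ such that $u$ and $v$ belong to the same connected component of $G\langle R\rangle$ and $u$ is balanced in $G\langle R\rangle$.
   Context: An RPP instance is a triple $(G,R,\omega)$, where $G=(V,E)$ is an undirected multigraph, $\omega\colon E\to\mathbb{N}$ assigns weights (parallel edges have equal weight), and $R$ is a nonempty multiset of edges of $G$. The instance is metric if $G$ contains an edge between any two vertices and the weights satisfy the triangle inequality $\omega(\{u,w\})\le\omega(\{u,v\})+\omega(\{v,w\})$ for all $u,v,w\in V$. For a multiset $X$ of edges: - $\omega(X)$ and $|X|$ are the weight and cardinality counted with multiplicity; - $V(X)$ is the set of vertices incident to edges of $X$; - $G\langle X\rangle=(V(X),X)$ is the multigraph formed by $X$ (no isolated vertices); - $\uplus$ denotes multiset sum. A vertex is balanced in a multigraph if its degree is even (a loop counts 2), and imbalanced otherwise. A multigraph without isolated vertices is Eulerian if it is connected and all vertices are balanced. An Eulerian extension for $(G,R,\omega)$ is a multiset $S$ of edges of $G$ such that $G\langle R\uplus S\rangle$ is Eulerian. It is edge-minimizing if there is no Eulerian extension $S'$ with $|S'|<|S|$ and $\omega(S')\le\omega(S)$. *)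

(* Defs.v *)
From mathcomp Require Import all_boot.
Set Implicit Arguments. Unset Strict Implicit. Unset Printing Implicit Defensive.

(* A multigraph G = (V, E): a finite vertex type V, a finite edge type E,
   and each edge e has (unordered) endpoints {ep1 e, ep2 e}; loops allowed
   (ep1 e = ep2 e), parallel edges allowed (distinct e with same endpoints).
   Multisets of edges are sequences over E (multiplicity = count). *)
Section RPP.
Variables (V E : finType) (ep1 ep2 : E -> V).

Definition has_ends (e : E) (u v : V) : bool :=
  ((ep1 e == u) && (ep2 e == v)) || ((ep1 e == v) && (ep2 e == u)).

Definition mweight (w : E -> nat) (X : seq E) : nat := \sum_(e <- X) w e.

(* degree of v in G<X>; a loop counts 2 *)
Definition mdeg (X : seq E) (v : V) : nat :=
  \sum_(e <- X) ((ep1 e == v) + (ep2 e == v)).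

Definition incident (X : seq E) (v : V) : bool :=
  has (fun e => (ep1 e == v) || (ep2 e == v)) X.

Definition madj (X : seq E) : rel V := fun u v => has (fun e => has_ends e u v) X.

Definition balanced (X : seq E) (v : V) : bool := ~~ odd (mdeg X v).

Definition same_comp (X : seq E) (u v : V) : bool :=
  [&& incident X u, incident X v & connect (madj X) u v].

(* G<X> is Eulerian: connected, all vertices balanced, no isolated vertices
   (automatic, since the vertex set is V(X)) *)
Definition eulerian (X : seq E) : Prop :=
  (forall u v, incident X u -> incident X v -> connect (madj X) u v) /\
  (forall v, incident X v -> balanced X v).

Definition eulerian_ext (R S : seq E) : Prop := eulerian (R ++ S).

Definition edge_minimizing (w : E -> nat) (R S : seq E) : Prop :=
  eulerian_ext R S /\
  ~ (exists S' : seq E, eulerian_ext R S' /\ size S' < size S /\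
                        mweight w S' <= mweight w S).

Definition rpp_instance (w : E -> nat) (R : seq E) : Prop :=
  (forall e e', has_ends e' (ep1 e) (ep2 e) -> w e = w e') /\ R != [::].

Definition metric (w : E -> nat) : Prop :=
  (forall u v : V, u != v -> exists e : E, has_ends e u v) /\
  (forall (u v x : V) (e1 e2 e3 : E),
      has_ends e1 u x -> has_ends e2 u v -> has_ends e3 v x ->
      w e1 <= w e2 + w e3).

End RPP.

(* Main.v *)
Require Import Defs.
From mathcomp Require Import all_boot.
Set Implicit Arguments. Unset Strict Implicit. Unset Printing Implicit Defensive.

Section Aux.
Variables (V E : finType) (ep1 ep2 : E -> V).

Lemma dE e a b y : has_ends ep1 ep2 e a b ->
  (ep1 e == y) + (ep2 e == y) = (a == y) + (b == y).
Proof. by rewrite /has_ends => /orP[]/andP[/eqP-> /eqP->] //; rewrite addnC. Qed.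

Lemma has_endsC e a b : has_ends ep1 ep2 e a b = has_ends ep1 ep2 e b a.
Proof. by rewrite /has_ends orbC. Qed.

Lemma ends2 e a b c d : has_ends ep1 ep2 e a b -> has_ends ep1 ep2 e c d ->
  (a = c /\ b = d) \/ (a = d /\ b = c).
Proof.
rewrite /has_ends => /orP[]/andP[/eqP<- /eqP<-] /orP[]/andP[/eqP-> /eqP->]; tauto.
Qed.

Lemma madj_sym X : symmetric (madj ep1 ep2 X).
Proof. move=> a b; rewrite /madj; apply: eq_has => e; exact: has_endsC. Qed.

Lemma connect_madj_sub (X Y : seq E) : {subset X <= Y} ->
  forall a b, connect (madj ep1 ep2 X) a b -> connect (madj ep1 ep2 Y) a b.
Proof.
move=> sub; apply: connect_sub => a b /hasP[e eX he]; apply: connect1.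
by apply/hasP; exists e => //; apply: sub.
Qed.

Lemma odd_sum (s : seq E) (F : E -> nat) :
  odd (\sum_(i <- s) F i) -> exists2 i, i \in s & odd (F i).
Proof.
elim: s => [|a s IH]; rewrite ?big_nil ?big_cons //.
rewrite oddD; case: (boolP (odd (F a))) => Ha.
  by move=> _; exists a; rewrite ?mem_head.
rewrite /= => /IH [i Hi Hodd]; exists i => //.
by rewrite in_cons Hi orbT.
Qed.

Lemma odd_end f u : odd ((ep1 f == u) + (ep2 f == u)) ->
  exists x, has_ends ep1 ep2 f u x.
Proof.
rewrite /has_ends.
case: (ep1 f =P u) => h1; case: (ep2 f =P u) => h2 //= _.
  by exists (ep2 f); rewrite eqxx.
by exists (ep1 f); rewrite eqxx.
Qed.

Lemma mdeg_cat X Y y : mdeg ep1 ep2 (X ++ Y) y = mdeg ep1 ep2 X y + mdeg ep1 ep2 Y y.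
Proof. by rewrite /mdeg big_cat. Qed.

Lemma incident_cat X Y y : incident ep1 ep2 (X ++ Y) y = incident ep1 ep2 X y || incident ep1 ep2 Y y.
Proof. by rewrite /incident has_cat. Qed.

Lemma reduce (R S S' : seq E) :
  eulerian_ext ep1 ep2 R S ->
  (forall y, odd (mdeg ep1 ep2 S' y) = odd (mdeg ep1 ep2 S y)) ->
  (forall y, incident ep1 ep2 S' y -> incident ep1 ep2 S y) ->
  (forall a b, madj ep1 ep2 (R ++ S) a b -> connect (madj ep1 ep2 (R ++ S')) a b) ->
  eulerian_ext ep1 ep2 R S'.
Proof.
move=> [Hc Hb] Hd Hi Hm.
have Hinc : forall y, incident ep1 ep2 (R ++ S') y -> incident ep1 ep2 (R ++ S) y.
  by move=> y; rewrite !incident_cat => /orP[->//|/Hi ->]; rewrite orbT.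
split.
  move=> a b /Hinc ia /Hinc ib; move: (Hc a b ia ib).
  by apply: connect_sub.
move=> y /Hinc iy; move: (Hb y iy); rewrite /balanced !mdeg_cat !oddD.
by rewrite Hd.
Qed.


Lemma ends_inc e a b : has_ends ep1 ep2 e a b ->
  ((ep1 e == a) || (ep2 e == a)) && ((ep1 e == b) || (ep2 e == b)).
Proof. by rewrite /has_ends => /orP[]/andP[/eqP-> /eqP->]; rewrite !eqxx ?orbT. Qed.

Lemma inc_ends e a b y : has_ends ep1 ep2 e a b ->
  (ep1 e == y) || (ep2 e == y) -> (y == a) || (y == b).
Proof.
rewrite /has_ends => /orP[]/andP[/eqP-> /eqP->] /orP[]/eqP->; rewrite !eqxx ?orbT //.
Qed.

Lemma step (R S S' T : seq E) e f u v x :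
  perm_eq S (e :: f :: T) -> {subset T <= S'} ->
  has_ends ep1 ep2 e u v -> has_ends ep1 ep2 f u x ->
  connect (madj ep1 ep2 R) u v -> connect (madj ep1 ep2 (R ++ S')) v x ->
  forall a b, madj ep1 ep2 (R ++ S) a b -> connect (madj ep1 ep2 (R ++ S')) a b.
Proof.
move=> pS sT he hf cR cvx.
have cuv : connect (madj ep1 ep2 (R ++ S')) u v.
  by apply: connect_madj_sub cR => z zR; rewrite mem_cat zR.
have cux : connect (madj ep1 ep2 (R ++ S')) u x := connect_trans cuv cvx.
have sym := sym_connect_sym (madj_sym (R ++ S')).
move=> a b /hasP[g]; rewrite mem_cat => /orP[gR|gS] hg.
- by apply: connect1; apply/hasP; exists g => //; rewrite mem_cat gR.
- move: gS; rewrite (perm_mem pS) !in_cons => /orP[/eqP eg|/orP[/eqP eg|gT]].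
  + by subst g; case: (ends2 hg he) => [[-> ->]|[-> ->]] //; rewrite sym.
  + by subst g; case: (ends2 hg hf) => [[-> ->]|[-> ->]] //; rewrite sym.
  + by apply: connect1; apply/hasP; exists g => //; rewrite mem_cat sT ?orbT.
Qed.

Lemma step_loop (R S S' T : seq E) e u :
  perm_eq S (e :: T) -> {subset T <= S'} -> has_ends ep1 ep2 e u u ->
  forall a b, madj ep1 ep2 (R ++ S) a b -> connect (madj ep1 ep2 (R ++ S')) a b.
Proof.
move=> pS sT he a b /hasP[g]; rewrite mem_cat => /orP[gR|gS] hg.
- by apply: connect1; apply/hasP; exists g => //; rewrite mem_cat gR.
- move: gS; rewrite (perm_mem pS) !in_cons => /orP[/eqP eg|gT].
  + by subst g; case: (ends2 hg he) => [[-> ->]|[-> ->]].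
  + by apply: connect1; apply/hasP; exists g => //; rewrite mem_cat sT ?orbT.
Qed.

End Aux.

Theorem mainTheorem5 (V E : finType) (ep1 ep2 : E -> V) (w : E -> nat)
    (R S : seq E) :
  rpp_instance ep1 ep2 w R ->
  metric ep1 ep2 w ->
  edge_minimizing ep1 ep2 w R S ->
  forall (e : E) (u v : V),
    e \in S -> has_ends ep1 ep2 e u v ->
    same_comp ep1 ep2 R u v -> balanced ep1 ep2 R u -> False.
Proof.
move=> _ [mconn mtri] [eul nomin] e u v eS he /and3P[iu iv cR] bu.
have [Hc Hb] := eul.
have buS : ~~ odd (mdeg ep1 ep2 S u).
  have := Hb u; rewrite incident_cat iu /= => /(_ isT).
  by move: bu; rewrite /balanced mdeg_cat oddD => /negbTE ->.
have pS := perm_to_rem eS.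
have dS y : mdeg ep1 ep2 S y = (u == y) + (v == y) + mdeg ep1 ep2 (rem e S) y.
  by rewrite /mdeg (perm_big _ pS) big_cons (dE _ he).
have szS : size S = (size (rem e S)).+1 by rewrite (perm_size pS).
have wS : mweight w S = w e + mweight w (rem e S).
  by rewrite /mweight (perm_big _ pS) big_cons.
case: (eqVneq u v) => [uv|uv].
  subst v; apply: nomin; exists (rem e S); split; [|split].
  - apply: (reduce eul) => [y|y|].
    + by rewrite dS addnn oddD odd_double.
    + by rewrite /incident => /hasP[g gT hg]; apply/hasP; exists g => //; exact: mem_rem gT.
    + by apply: (step_loop pS _ he).
  - by rewrite szS.
  - by rewrite wS leq_addl.
have : odd (mdeg ep1 ep2 (rem e S) u).
  by move: buS; rewrite dS eqxx eq_sym (negbTE uv) oddD /= negbK.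
move=> /odd_sum [f fR Hf].
have [x hf] := odd_end Hf.
set T := rem f (rem e S).
have pS2 : perm_eq S (e :: f :: T).
  by apply: (perm_trans pS); rewrite perm_cons perm_to_rem.
have dS2 y : mdeg ep1 ep2 S y = (u == y) + (v == y) + ((u == y) + (x == y) + mdeg ep1 ep2 T y).
  by rewrite /mdeg (perm_big _ pS2) !big_cons (dE _ he) (dE _ hf).
have wS2 : mweight w S = w e + (w f + mweight w T).
  by rewrite /mweight (perm_big _ pS2) !big_cons.
have szS2 : size S = (size T).+2 by rewrite (perm_size pS2).
have sTS : forall z, z \in T -> z \in S.
  by move=> z zT; apply: mem_rem; apply: mem_rem zT.
case: (eqVneq v x) => [vx|vx].
  subst x; apply: nomin; exists T; split; [|split].
  - apply: (reduce eul) => [y|y|].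
    + by rewrite dS2 !oddD; case: (u == y); case: (v == y) => //=; rewrite ?negbK.
    + by rewrite /incident => /hasP[g gT hg]; apply/hasP; exists g => //; exact: sTS.
    + by apply: (step pS2 _ he hf cR (connect0 _ _)).
  - by rewrite szS2.
  - by rewrite wS2 addnA leq_addl.
have [g hg] := mconn v x vx.
have wg := mtri v u x g e f hg (etrans (has_endsC _ _ _ _ _) he) hf.
apply: nomin; exists (g :: T); split; [|split].
- apply: (reduce eul) => [y|y|].
  + rewrite dS2 /mdeg big_cons (dE _ hg) -/(mdeg ep1 ep2 T y) !oddD.
    by case: (u == y); case: (v == y); case: (x == y) => //=; rewrite ?negbK.
  + rewrite /incident /= => /orP[/(inc_ends hg)/orP[]/eqP->|/hasP[g' gT hg']].
    * by apply/hasP; exists e => //; case/andP: (ends_inc he).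
    * by apply/hasP; exists f; [exact: mem_rem fR | case/andP: (ends_inc hf)].
    * by apply/hasP; exists g' => //; exact: sTS.
  + apply: (step pS2 _ he hf cR).
    * by move=> z zT; rewrite in_cons zT orbT.
    * by apply: connect1; apply/hasP; exists g => //; rewrite mem_cat mem_head orbT.
- by rewrite szS2.
- by rewrite wS2 /mweight big_cons -/(mweight w T) addnA leq_add2r.
Qed.
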